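(* A topological space $X$ is $H^*$-$T_{1/2}$ if and only if for each $x\in X$ the singleton $\{x\}$ is $H^*$-open or $H^*$-closed in $X$.
   Context: Let $(X,\tau)$ be a topological space, with closure $\mathrm{cl}$ and interior $\mathrm{int}$. A set $A\subseteq X$ is semi-open if $A\subseteq\mathrm{cl}(\mathrm{int}(A))$; semi-closed if its complement is semi-open; $\mathrm{scl}(A)$ is the intersection of all semi-closed sets containing $A$. $A$ is $w$-closed if $\mathrm{cl}(A)\subseteq U$ whenever $A\subseteq U$ and $U$ is semi-open; $w$-open if its complement is $w$-closed. $A$ is $h$-closed if $\mathrm{scl}(A)\subseteq U$ whenever $A\subseteq U$ and $U$ is $w$-open; $h\text{-}\mathrm{cl}(A)$ is the intersection of all $h$-closed sets containing $A$. $A$ is an $\alpha^*$-set if $\mathrm{int}(\mathrm{cl}(\mathrm{int}(A)))=\mathrm{int}(A)$, and a $C$-set if $A=U\cap V$ with $U$ open and $V$ an $\alpha^*$-set. $A$ is $hCg$-closed if $h\text{-}\mathrm{cl}(A)\subseteq U$ whenever $A\subseteq U$ and $U$ is a $C$-set; $hCg$-open if its complement is $hCg$-closed. $A$ is $H^*$-closed if $h\text{-}\mathrm{cl}(A)\subseteq U$ whenever $A\subseteq U$ and $U$ is $hCg$-open; $H^*$-open if its complement is $H^*$-closed; $H^*\text{-}\mathrm{cl}(A)$ is the intersection of all $H^*$-closed sets containing $A$. $A$ is $gH^*$-closed if $H^*\text{-}\mathrm{cl}(A)\subseteq U$ whenever $A\subseteq U$ and $U$ is $H^*$-open. $X$ is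 $H^*$-$T_{1/2}$ if every $gH^*$-closed subset of $X$ is $H^*$-closed. *)

(* Defs.v *)
From HB Require Import structures.
From mathcomp Require Import all_boot all_order.
From mathcomp Require Import boolp classical_sets topology.
Set Implicit Arguments. Unset Strict Implicit. Unset Printing Implicit Defensive.
Local Open Scope classical_set_scope.

Section HStar.
Variable T : topologicalType.

Definition gen_cl (P : set T -> Prop) (A : set T) : set T :=
  \bigcap_(F in [set F | P F /\ A `<=` F]) F.

Definition semi_open (A : set T) : Prop := A `<=` closure (interior A).
Definition semi_closed (A : set T) : Prop := semi_open (~` A).
Definition scl (A : set T) : set T := gen_cl semi_closed A.

Definition w_closed (A : set T) : Prop :=
  forall U, A `<=` U -> semi_open U -> closure A `<=` U.
Definition w_open (A : set T) : Prop := w_closed (~` A).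

Definition h_closed (A : set T) : Prop :=
  forall U, A `<=` U -> w_open U -> scl A `<=` U.
Definition h_cl (A : set T) : set T := gen_cl h_closed A.

Definition alpha_star_set (A : set T) : Prop :=
  interior (closure (interior A)) = interior A.
Definition C_set (A : set T) : Prop :=
  exists U V, open U /\ alpha_star_set V /\ A = U `&` V.

Definition hCg_closed (A : set T) : Prop :=
  forall U, A `<=` U -> C_set U -> h_cl A `<=` U.
Definition hCg_open (A : set T) : Prop := hCg_closed (~` A).

Definition Hstar_closed (A : set T) : Prop :=
  forall U, A `<=` U -> hCg_open U -> h_cl A `<=` U.
Definition Hstar_open (A : set T) : Prop := Hstar_closed (~` A).
Definition Hstar_cl (A : set T) : set T := gen_cl Hstar_closed A.

Definition gHstar_closed (A : set T) : Prop :=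
  forall U, A `<=` U -> Hstar_open U -> Hstar_cl A `<=` U.

Definition Hstar_T12 : Prop :=
  forall A : set T, gHstar_closed A -> Hstar_closed A.
End HStar.

(* Main.v *)
Require Import Defs.
From mathcomp Require Import all_boot classical_sets topology.
From Stdlib Require Import Classical.
Local Open Scope classical_set_scope.

Set Implicit Arguments. Unset Strict Implicit.
Section Aux.
Context {T : topologicalType}.
Implicit Types (A B S U V F O : set T).

Lemma gen_cl_sub (P : set T -> Prop) A F : P F -> A `<=` F -> gen_cl P A `<=` F.
Proof. by move=> PF AF x H; exact: (H F (conj PF AF)). Qed.

Lemma gen_cl_mono (P : set T -> Prop) A B : A `<=` B -> gen_cl P A `<=` gen_cl P B.
Proof.
move=> AB x H F [PF BF]; apply: H; split => //; exact: subset_trans AB BF.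
Qed.

Lemma gen_cl_notin (P : set T -> Prop) A x : ~ gen_cl P A x ->
  exists F, P F /\ A `<=` F /\ ~ F x.
Proof.
move=> H; apply: NNPP => H2; apply: H => F [PF AF]; apply: NNPP => nF.
by apply: H2; exists F.
Qed.

Lemma cl_meet S O x : closure S x -> open O -> O x -> exists z, S z /\ O z.
Proof.
move=> H oO Ox; have [z [Sz Oz]] := H O (open_nbhs_nbhs (conj oO Ox)).
by exists z.
Qed.

Lemma int_open S : open S -> interior S = S.
Proof.
move=> oS; rewrite eqEsubset; split; first exact: interior_subset.
by move: oS; rewrite openE.
Qed.

Lemma int_max O S : open O -> O `<=` S -> O `<=` interior S.
Proof. by move=> oO OS; rewrite -(open_subsetE _ oO). Qed.

Lemma cl_min S F : closed F -> S `<=` F -> closure S `<=` F.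
Proof.
move=> cF SF; rewrite (closure_id F).1 //; exact: closureS.
Qed.

Lemma open_semi_open S : open S -> semi_open S.
Proof.
move=> oS x Sx; apply: subset_closure; by rewrite int_open.
Qed.

Lemma closed_h_closed F : closed F -> h_closed F.
Proof.
move=> cF U FU _; apply: subset_trans FU.
apply: gen_cl_sub => //; rewrite /semi_closed.
by apply: open_semi_open; exact: closed_openC.
Qed.

Lemma L3 A y : h_cl A y -> ~ A y -> w_closed [set y].
Proof.
move=> hy nAy; apply: NNPP => nw.
have hc : h_closed (~` [set y]).
  move=> V sV woV.
  case: (classic (V y)) => Vy.
    move=> x _; case: (classic (x = y)) => [->|nxy] //; exact: sV.
  have E : ~` V = [set y].
    rewrite eqEsubset; split => x.
      by move=> nVx; apply: NNPP => nxy; apply: nVx; exact: sV.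
    by move=> ->.
  by move: woV; rewrite /w_open E.
have := @gen_cl_sub (@h_closed T) A (~` [set y]) hc (_ : A `<=` ~` [set y]) y hy.
apply => //; by move=> x Ax xy; apply: nAy; rewrite -xy.
Qed.

End Aux.
Unset Implicit Arguments.

Theorem theorem5p2 (T : topologicalType) :
  Hstar_T12 T <->
  (forall x : T, Hstar_open [set x] \/ Hstar_closed [set x]).
Proof.
split.
  move=> H12 x; case: (classic (Hstar_closed [set x])) => Hx; first by right.
  left; apply: H12 => U sU HU.
  case: (classic (U x)) => Ux.
    move=> z _; case: (classic (z = x)) => [->|nzx] //; exact: sU.
  exfalso; apply: Hx.
  have E : U = ~` [set x].
    rewrite eqEsubset; split => //; by move=> z Uz zx; apply: Ux; rewrite -zx.
  by move: HU; rewrite E /Hstar_open setCK.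
move=> H1 A gA U AU hU y hy; apply: NNPP => nUy.
have nAy : ~ A y by move=> Ay; apply: nUy; exact: AU.
have [F [HF [AF nFy]]] : exists F, Hstar_closed F /\ A `<=` F /\ ~ F y.
  case: (H1 y) => Hy.
    exists (~` [set y]); split => //; split; last by apply.
    by move=> x Ax xy; apply: nAy; rewrite -xy.
  apply: (@gen_cl_notin _ (@Hstar_closed T)) => hyA.
  have Ho : Hstar_open (~` [set y]) by rewrite /Hstar_open setCK.
  have AS : A `<=` ~` [set y] by move=> x Ax xy; apply: nAy; rewrite -xy.
  exact: (gA _ AS Ho y hyA erefl).
case: (classic (exists z, closure [set y] z /\ z <> y)) => [[z [Kz zy]]|nz].
  set K := closure [set y].
  have wy := L3 hy nAy.
  have cK : closed K by exact: closed_closure.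
  have Ky : K y by exact: subset_closure.
  have fa : forall v, K v -> closure [set v] y.
    move=> v Kv; apply: NNPP => nv.
    have oV : open (~` closure [set v]) by apply: closed_openC; exact: closed_closure.
    have sV : [set y] `<=` ~` closure [set v] by move=> x ->.
    have := wy _ sV (open_semi_open oV) v Kv; apply.
    exact: subset_closure.
  have ind : forall u v, K u -> K v -> closure [set v] u.
    move=> u v Ku Kv.
    have sub : [set y] `<=` closure [set v] by move=> x ->; exact: fa.
    exact (cl_min (@closed_closure T [set v]) sub Ku).
  have Kopen : open K.
    have nso : ~ semi_open (~` [set z]).
      move=> so; have sz : [set y] `<=` ~` [set z] by move=> x xy xz; apply: zy; rewrite -xz xy.
      exact: (wy _ sz so z Kz erefl).
    have [x [nxz nclx]] : exists x, (~` [set z]) x /\ ~ closure (interior (~` [set z])) x.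
      apply: NNPP => H; apply: nso => x nx; apply: NNPP => ncl; apply: H; by exists x.
    have Ox : interior (~` interior (~` [set z])) x.
      rewrite (interiorC (interior (~` [set z]))); exact: nclx.
    have OK : interior (~` interior (~` [set z])) `<=` K.
      move=> u Ou; apply: NNPP => nKu.
      have : interior (~` [set z]) u.
        apply: (int_max (closed_openC cK)) => //.
        by move=> w nKw wz; apply: nKw; rewrite wz.
      exact: (interior_subset Ou).
    have xK : interior K x.
      by apply: (int_max (@open_interior _ _) OK).
    rewrite openE => v Kv.
    have [w [-> Kw]] := cl_meet (ind x v (interior_subset xK) Kv) (@open_interior _ K) xK.
    exact: Kw.
  case: (classic (exists b, A b /\ K b)) => [[b [Ab Kb]]|nAK]; last first.
    have AK : A `<=` ~` K by move=> x Ax Kx; apply: nAK; exists x.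
    have := @gen_cl_sub _ (@h_closed T) A (~` K) (closed_h_closed (open_closedC Kopen)) AK y hy.
    by apply.
  have Ub : U b by exact: AU.
  have clb : closure [set b] = K.
    rewrite eqEsubset; split; first by apply: cl_min => // x ->.
    by apply: cl_min; [exact: closed_closure| move=> x ->; exact: fa].
  have hb : h_cl (~` U) b.
    move=> G [hG sG]; apply: NNPP => nGb.
    have GS : G `<=` ~` [set b] by move=> x Gx xb; apply: nGb; rewrite -xb.
    have wob : w_open (~` [set b]).
      rewrite /w_open setCK => V bV soV x.
      rewrite clb => Kx.
      have [c [Vc Kc]] := cl_meet (soV b (bV b erefl)) Kopen Kb.
      have [w [-> Vw]] := cl_meet (ind c x Kc Kx) (@open_interior _ V) Vc.
      exact: interior_subset.
    have sclb : scl G b.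
      move=> S [scS GS']; apply: NNPP => nSb.
      have [c [nSc Kc]] := cl_meet (scS b nSb) Kopen Kb.
      have [w [-> nSw]] := cl_meet Kc (@open_interior _ (~` S)) nSc.
      by apply: (interior_subset nSw); apply: GS'; apply: sG.
    exact: (hG _ GS wob b sclb erefl).
  have Cb : C_set (~` [set b]).
    exists setT, (~` [set b]); split; first exact: openT.
    split; last by rewrite setTI.
    rewrite /alpha_star_set interiorC clb.
    have cnK : closed (~` K) by exact: open_closedC.
    have oK : open (~` K) by apply: closed_openC.
    by rewrite -(closure_id _).1 // int_open.
  have nUb : ~` U `<=` ~` [set b] by move=> x nUx xb; apply: nUx; rewrite xb.
  exact: (hU _ nUb Cb b hb erefl).
have cy : closure [set y] `<=` [set y].
  by move=> z Kz; apply: NNPP => zy; apply: nz; exists z.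
have ho : hCg_open (~` [set y]).
  rewrite /hCg_open setCK => V yV _.
  apply: subset_trans yV; apply: gen_cl_sub => //.
  by apply: closed_h_closed.
have FS : F `<=` ~` [set y] by move=> x Fx xy; apply: nFy; rewrite -xy.
exact: (HF _ FS ho y (@gen_cl_mono _ (@h_closed T) _ _ AF y hy) erefl).
Qed.
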